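(* For every finite preordered set $C$ and every prime power $q$, $\rho_C(q)=\rho_{C^*}(q)$. In particular, for every tuple $(l_1,\dots,l_s)$ of nonnegative integers, $\rho_{(l_1,\dots,l_s)}(q)=\rho_{(l_s,\dots,l_1)}(q)$.
   Context: A preorder on a finite set $C$ is a reflexive transitive relation $\preccurlyeq$. Its dual $C^*$ is $C$ with $x\preccurlyeq' y$ iff $y\preccurlyeq x$. $M^C(q)$ is the ring of $C\times C$ matrices $(x_{ij})$ over $\mathbb{F}_q$ with $x_{ij}=0$ unless $i\preccurlyeq j$; $P^C(q)$ is its group of invertible elements and $N^C(q)$ its set of nilpotent elements; $\rho_C(q)$ is the number of orbits of $P^C(q)$ on $N^C(q)$ under conjugation. For a tuple $\mathbf l=(l_1,\dots,l_s)$, $\rho_{\mathbf l}(q)=\rho_C(q)$ for $C$ a disjoint union of blocks $B_1,\dots,B_s$ with $|B_i|=l_i$ and $x\preccurlyeq y$ iff $x\in B_i,y\in B_j$ with $i\le j$; equivalently, $\rho_{\mathbf l}(q)$ is the number of conjugacy orbits of invertible block upper triangular matrices with diagonal blocks of sizes $l_1,\dots,l_s$ on the nilpotent such matrices. *)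

(* Defs.v *)
From HB Require Import structures.
From mathcomp Require Import all_boot all_order all_algebra all_field.
From Stdlib Require Import ClassicalEpsilon.
Set Implicit Arguments. Unset Strict Implicit. Unset Printing Implicit Defensive.
Import GRing.Theory.
Local Open Scope ring_scope.

Definition is_preorder (C : finType) (r : rel C) : Prop :=
  reflexive r /\ transitive r.

Definition dual_rel (C : finType) (r : rel C) : rel C := fun x y => r y x.

Definition asbool (P : Prop) : bool :=
  if excluded_middle_informative P then true else false.

Definition idx_rel (C : finType) (r : rel C) : rel 'I_#|C| :=
  fun i j => r (enum_val i) (enum_val j).

Section Incidence.
Variables (F : finFieldType) (n : nat) (r : rel 'I_n).

Definition in_MC (A : 'M[F]_n) : bool := [forall i, forall j, ~~ r i j ==> (A i j == 0)].

Definition in_PC (A : 'M[F]_n) : bool :=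
  asbool (exists B : 'M[F]_n, [/\ in_MC B, A *m B = 1%:M & B *m A = 1%:M]) && in_MC A.

Definition in_NC (A : 'M[F]_n) : bool :=
  in_MC A && asbool (exists k : nat, A ^+ k = 0).

Definition PC_orbit (N : 'M[F]_n) : {set 'M[F]_n} :=
  [set N' | [exists g, in_PC g && (N' == g *m N *m invmx g)]].

Definition rho_idx : nat := #|[set PC_orbit N | N in [set N | in_NC N]]|.
End Incidence.

Definition rho (F : finFieldType) (C : finType) (r : rel C) : nat :=
  rho_idx F (idx_rel r).

(* Block preorder for a tuple l = (l_1,...,l_s): the index set is 'I_(sumn l),
   split into consecutive blocks of sizes l_1, ..., l_s; block l i is the
   (0-based) index of the block containing i. *)
Definition block (l : seq nat) (i : nat) : nat :=
  find (fun k => i < sumn (take k.+1 l))%N (iota 0 (size l)).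

Definition block_rel (l : seq nat) : rel 'I_(sumn l) :=
  fun i j => (block l i <= block l j)%N.

Definition rho_tuple (F : finFieldType) (l : seq nat) : nat :=
  rho F (@block_rel l).

(* Main.v *)
Require Import Defs.
From HB Require Import structures.
From mathcomp Require Import all_boot all_order all_algebra all_field all_fingroup.
From Stdlib Require Import ClassicalEpsilon.
Set Implicit Arguments. Unset Strict Implicit. Unset Printing Implicit Defensive.
Import GRing.Theory.
Local Open Scope ring_scope.

Lemma asboolE (P : Prop) : asbool P = true <-> P.
Proof. rewrite /asbool; case: excluded_middle_informative => //. Qed.

Lemma in_PCE (F : finFieldType) n (r : rel 'I_n) (g : 'M[F]_n) :
  in_PC r g = [&& g \in unitmx, in_MC r g & in_MC r (invmx g)].
Proof.
rewrite /in_PC.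
case: (boolP (asbool _)) => [/asboolE [B [hB h1 h2]]|hn] /=.
  have gu : g \in unitmx by case: (mulmx1_unit h1).
  have -> : invmx g = B by rewrite -[B](mulKmx gu) h1 mulmx1.
  by rewrite gu hB andbT.
apply/esym/negbTE; apply: contra hn => /and3P[gu hg hi].
by apply/asboolE; exists (invmx g); split => //; [rewrite mulmxV|rewrite mulVmx].
Qed.

Lemma rho_transfer (F : finFieldType) n (r r' : rel 'I_n) (Phi : 'M[F]_n -> 'M[F]_n) :
  injective Phi ->
  (forall A, in_NC r' (Phi A) = in_NC r A) ->
  (forall g, in_PC r g -> exists h, in_PC r' h /\
      forall N, Phi (g *m N *m invmx g) = h *m Phi N *m invmx h) ->
  (forall h, in_PC r' h -> exists g, in_PC r g /\
      forall N, Phi (g *m N *m invmx g) = h *m Phi N *m invmx h) ->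
  rho_idx F r = rho_idx F r'.
Proof.
move=> inj hN b1 b2.
have [Psi PhiK PsiK] := injF_bij inj.
have hO N : PC_orbit r' (Phi N) = Phi @: PC_orbit r N.
  apply/setP => N'; rewrite inE; apply/existsP/imsetP.
  - case=> h /andP[hP /eqP ->].
    have [g [gP e]] := b2 h hP.
    exists (g *m N *m invmx g); last by rewrite e.
    by rewrite inE; apply/existsP; exists g; rewrite gP eqxx.
  - case=> M; rewrite inE => /existsP[g /andP[gP /eqP ->]] ->.
    have [h [hP e]] := b1 g gP.
    by exists h; rewrite hP e eqxx.
have eN : [set N | in_NC r' N] = Phi @: [set N | in_NC r N].
  apply/setP => N'; rewrite inE; apply/idP/imsetP.
  - by move=> h; exists (Psi N'); rewrite ?inE ?PsiK // -hN PsiK.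
  - by case=> M; rewrite inE => hM ->; rewrite hN.
have e1 : [set PC_orbit r' N | N in Phi @: [set N | in_NC r N]] =
    (fun A : {set 'M[F]_n} => Phi @: A) @: [set PC_orbit r N | N in [set N | in_NC r N]].
  by rewrite -!imset_comp; apply: eq_imset => N; rewrite /= hO.
rewrite /rho_idx eN e1 (card_imset _ (imset_inj inj)) //.
Qed.
Lemma in_MC_tr (F : finFieldType) n (r : rel 'I_n) (A : 'M[F]_n) :
  in_MC (dual_rel r) A^T = in_MC r A.
Proof.
apply/forallP/forallP => h i; apply/forallP => j.
  by have := forallP (h j) i; rewrite mxE.
by rewrite mxE; exact: (forallP (h j) i).
Qed.

Lemma in_MC_tr' (F : finFieldType) n (r : rel 'I_n) (A : 'M[F]_n) :
  in_MC r A^T = in_MC (dual_rel r) A.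
Proof. by rewrite -in_MC_tr trmxK. Qed.

Lemma trmx_exp (F : finFieldType) n (A : 'M[F]_n) k : (A ^+ k)^T = A^T ^+ k.
Proof.
elim: k => [|k IH]; first by rewrite !expr0 trmx1.
by rewrite exprS exprSr -!mulmxE trmx_mul IH.
Qed.

Lemma in_NC_tr (F : finFieldType) n (r : rel 'I_n) (A : 'M[F]_n) :
  in_NC (dual_rel r) A^T = in_NC r A.
Proof.
rewrite /in_NC in_MC_tr; congr andb.
case: (boolP (asbool (exists k, A ^+ k = 0))) => [/asboolE [k hk]|hn].
  by apply/asboolE; exists k; rewrite -trmx_exp hk trmx0.
apply/negbTE; apply: contra hn => /asboolE [k hk]; apply/asboolE; exists k.
by apply: trmx_inj; rewrite trmx_exp hk trmx0.
Qed.

Lemma rho_idx_dual (F : finFieldType) n (r : rel 'I_n) :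
  rho_idx F r = rho_idx F (dual_rel r).
Proof.
apply: (@rho_transfer F n r (dual_rel r) trmx).
- exact: trmx_inj.
- exact: in_NC_tr.
- move=> g; rewrite in_PCE => /and3P[gu hg hi].
  exists (invmx g)^T; split.
    by rewrite in_PCE unitmx_tr unitmx_inv gu in_MC_tr trmx_inv invmxK in_MC_tr hg hi.
  by move=> N; rewrite trmx_inv invmxK !trmx_mul trmx_inv mulmxA.
- move=> h; rewrite in_PCE => /and3P[hu hh hi].
  exists (invmx h)^T; split.
    by rewrite in_PCE unitmx_tr unitmx_inv hu in_MC_tr' trmx_inv invmxK in_MC_tr' hh hi.
  by move=> N; rewrite trmx_inv invmxK !trmx_mul trmx_inv !trmxK mulmxA.
Qed.
Definition pmx (F : finFieldType) n (s : {perm 'I_n}) (A : 'M[F]_n) : 'M[F]_n :=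
  \matrix_(i, j) A (s i) (s j).

Section PermSec.
Variables (F : finFieldType) (n : nat) (s : {perm 'I_n}).
Local Notation P := (@pmx F n s).

Lemma pmx_inj : injective P.
Proof.
move=> A B e; apply/matrixP => i j.
have := congr1 (fun M : 'M[F]_n => M (s^-1 i)%g (s^-1 j)%g) e.
by rewrite /= /pmx !mxE !permKV.
Qed.

Lemma pmxK A : pmx (s^-1)%g (P A) = A.
Proof. by apply/matrixP => i j; rewrite /pmx !mxE !permKV. Qed.

Lemma pmxM A B : P (A *m B) = P A *m P B.
Proof.
apply/matrixP => i j; rewrite /pmx !mxE (reindex_inj (@perm_inj _ s)).
by apply: eq_bigr => k _; rewrite !mxE.
Qed.

Lemma pmx1 : P 1%:M = 1%:M.
Proof. by apply/matrixP => i j; rewrite /pmx !mxE (inj_eq perm_inj). Qed.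

Lemma pmx0 : P 0 = 0.
Proof. by apply/matrixP => i j; rewrite /pmx !mxE. Qed.

Lemma pmxX A k : P (A ^+ k) = P A ^+ k.
Proof.
elim: k => [|k IH]; first by rewrite !expr0 pmx1.
by rewrite !exprS -!mulmxE pmxM IH.
Qed.

Lemma pmx_inv g : g \in unitmx -> P g \in unitmx /\ invmx (P g) = P (invmx g).
Proof.
move=> gu.
have e : P g *m P (invmx g) = 1%:M by rewrite -pmxM mulmxV // pmx1.
have [pu _] := mulmx1_unit e.
by split => //; rewrite -[P (invmx g)](mulKmx pu) e mulmx1.
Qed.

Variables (r r' : rel 'I_n).
Hypothesis hr : forall i j, r' i j = r (s i) (s j).

Lemma in_MC_pmx A : in_MC r' (P A) = in_MC r A.
Proof.
apply/forallP/forallP => h i; apply/forallP => j.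
  have := forallP (h (s^-1 i)%g) (s^-1 j)%g.
  by rewrite hr /pmx mxE !permKV.
by rewrite hr /pmx mxE; exact: (forallP (h (s i)) (s j)).
Qed.

Lemma in_NC_pmx A : in_NC r' (P A) = in_NC r A.
Proof.
rewrite /in_NC in_MC_pmx; congr andb.
case: (boolP (asbool (exists k, A ^+ k = 0))) => [/asboolE [k hk]|hn].
  by apply/asboolE; exists k; rewrite -pmxX hk pmx0.
apply/negbTE; apply: contra hn => /asboolE [k hk]; apply/asboolE; exists k.
by apply: pmx_inj; rewrite pmxX hk pmx0.
Qed.

Lemma in_PC_pmx g : in_PC r g -> in_PC r' (P g).
Proof.
rewrite !in_PCE => /and3P[gu hg hi].
have [pu ->] := pmx_inv gu.
by rewrite pu !in_MC_pmx hg hi.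
Qed.
End PermSec.

Lemma rho_idx_perm (F : finFieldType) n (r r' : rel 'I_n) (s : {perm 'I_n}) :
  (forall i j, r' i j = r (s i) (s j)) -> rho_idx F r = rho_idx F r'.
Proof.
move=> hr.
have hr' : forall i j, r i j = r' (s^-1 i)%g (s^-1 j)%g by move=> i j; rewrite hr !permKV.
apply: (@rho_transfer F n r r' (@pmx F n s)).
- exact: pmx_inj.
- exact: in_NC_pmx.
- move=> g gP; exists (pmx s g); split; first exact: (in_PC_pmx hr).
  move=> N; rewrite !pmxM.
  by move: gP; rewrite in_PCE => /and3P[gu _ _]; have [_ ->] := pmx_inv s gu.
- move=> h hP; exists (pmx (s^-1)%g h); split; first exact: (in_PC_pmx hr').
  have hu : pmx (s^-1)%g h \in unitmx.
    by move: hP; rewrite in_PCE => /and3P[hu _ _]; have [] := pmx_inv (s^-1)%g hu.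
  have e : pmx s (pmx (s^-1)%g h) = h by have := pmxK (s^-1)%g h; rewrite invgK.
  by move=> N; rewrite !pmxM -(pmx_inv s hu).2 e.
Qed.
Lemma rho_idx_cast (F : finFieldType) n m (e : n = m) (r : rel 'I_n) (r' : rel 'I_m)
  (sg : 'I_n -> 'I_m) : injective sg -> (forall i j, r' (sg i) (sg j) = r i j) ->
  rho_idx F r = rho_idx F r'.
Proof.
subst m => inj h.
pose p := perm inj.
apply: (@rho_idx_perm F n r r' (p^-1)%g) => i j.
have hp x : sg x = p x by rewrite /p permE.
by rewrite -h !hp !permKV.
Qed.

Lemma rho_iso (F : finFieldType) (C D : finType) (r : rel C) (r' : rel D) (f : C -> D) :
  bijective f -> (forall x y, r' (f x) (f y) = r x y) -> rho F r = rho F r'.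
Proof.
move=> bf h.
apply: (@rho_idx_cast F _ _ (bij_eq_card bf) _ _ (fun i => enum_rank (f (enum_val i)))).
  move=> i j /enum_rank_inj /(bij_inj bf); exact: enum_val_inj.
by move=> i j; rewrite /idx_rel !enum_rankK h.
Qed.
From Stdlib Require Import Lia.
Section BlockSec.
Local Open Scope nat_scope.

Lemma sumn_take_mono (l : seq nat) a b : a <= b -> sumn (take a l) <= sumn (take b l).
Proof.
move=> ab; rewrite -(subnKC ab) takeD sumn_cat; exact: leq_addr.
Qed.

Lemma block_spec l i k : k < size l ->
  sumn (take k l) <= i < sumn (take k.+1 l) -> block l i = k.
Proof.
move=> ks /andP[ha hb]; rewrite /block.
set P := (fun k0 : nat => i < sumn (take k0.+1 l)).
have Pk : P k by [].
have hs : has P (iota 0 (size l)).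
  by apply/hasP; exists k => //; rewrite mem_iota.
case: (ltngtP (find P (iota 0 (size l))) k) => // c.
  have := nth_find 0 hs; rewrite nth_iota; last by move: hs; rewrite has_find size_iota.
  rewrite /P add0n => h.
  have := leq_trans h (sumn_take_mono l c); by rewrite ltnNge ha.
have := before_find 0 c; rewrite nth_iota // add0n /P hb //.
Qed.

Lemma block_ex l i : i < sumn l ->
  block l i < size l /\ sumn (take (block l i) l) <= i < sumn (take (block l i).+1 l).
Proof.
move=> il; rewrite /block.
set P := (fun k0 : nat => i < sumn (take k0.+1 l)).
have hs : has P (iota 0 (size l)).
  have sp : 0 < size l by rewrite lt0n size_eq0; apply/eqP => e; rewrite e in il.
  apply/hasP; exists (size l).-1; first by rewrite mem_iota add0n ltn_predL sp.
  by rewrite /P prednK // take_size.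
set f := find P _.
have fs : f < size l by move: hs; rewrite has_find size_iota.
have Pf : i < sumn (take f.+1 l) by have := nth_find 0 hs; rewrite nth_iota // add0n.
split => //; rewrite Pf andbT.
case ef: f fs Pf => [|g] fs Pf /=; first by rewrite take0.
have : g < find P (iota 0 (size l)) by rewrite -/f ef.
move/(before_find 0); rewrite nth_iota; last exact: ltnW.
by rewrite /P add0n => /negbT; rewrite -leqNgt.
Qed.

Lemma block_rev l i : i < sumn l ->
  block (rev l) (sumn l - i.+1) = size l - (block l i).+1.
Proof.
move=> il; have [ks /andP[ha hb]] := block_ex il.
set k := block l i in ks ha hb *.
have hT : sumn (take k.+1 l) <= sumn l.
  by have := congr1 sumn (cat_take_drop k.+1 l); rewrite sumn_cat => <-; rewrite leq_addr.
have sd j : sumn (drop j l) = sumn l - sumn (take j l).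
  by have := congr1 sumn (cat_take_drop j l); rewrite sumn_cat => <-; rewrite addKn.
apply: block_spec; first by rewrite size_rev; move: ks => /leP ?; apply/leP; rewrite -?minusE; lia.
rewrite !take_rev !sumn_rev ?size_rev.
rewrite (subKn ks) (subnSK ks) (subKn (ltnW ks)).
rewrite !sd.
move: ha hb hT il => /leP h1 /leP h2 /leP h3 /leP h4.
apply/andP; split; apply/leP; rewrite -?minusE; lia.
Qed.
End BlockSec.
Lemma rho_dual_gen (F : finFieldType) (C : finType) (r : rel C) :
  rho F r = rho F (dual_rel r).
Proof. exact: rho_idx_dual. Qed.

Theorem mainTheorem16 :
  forall (F : finFieldType),
    (forall (C : finType) (r : rel C), is_preorder r -> rho F r = rho F (dual_rel r)) /\
    (forall l : seq nat, rho_tuple F l = rho_tuple F (rev l)).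
Proof.
move=> F; split; first by move=> C r _; exact: rho_dual_gen.
move=> l; rewrite /rho_tuple rho_dual_gen.
pose f (i : 'I_(sumn l)) : 'I_(sumn (rev l)) := cast_ord (esym (sumn_rev l)) (rev_ord i).
have finj : injective f.
  by move=> x y /(congr1 val) /= e; apply: rev_ord_inj; apply: val_inj.
apply: (@rho_iso F _ _ _ _ f).
  by apply: (inj_card_bij finj); rewrite !card_ord sumn_rev.
move=> x y; rewrite /block_rel /dual_rel /f /= !block_rev ?ltn_ord //.
have := block_ex (ltn_ord x); have := block_ex (ltn_ord y).
move=> [/leP hy _] [/leP hx _].
apply/idP/idP => /leP h; apply/leP; rewrite -?minusE in h *; lia.
Qed.
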